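(* Let $n\ge k\ge 2$ be integers. For a probability vector $\lambda=(\lambda_1,\ldots,\lambda_n)$ (identified with the diagonal density matrix $\mathrm{diag}(\lambda_1,\ldots,\lambda_n)$) define $\rho^P(\lambda)\in\mathbb{R}^n$ by $\rho^P(\lambda)_i=\frac1k\sum_{j=i}^{i+k-1}\lambda_j$, indices taken modulo $n$ (this is the map induced by the POVM $P=(\tfrac1kQ_i)_{i=1}^n$, $Q_i$ the diagonal matrix with $1$ in positions $i,i+1,\ldots,i+k-1$ mod $n$ and $0$ elsewhere). Then the map $\lambda\mapsto\rho^P(\lambda)$ on probability vectors is injective (the POVM is informationally complete) if and only if $k$ and $n$ are coprime.
   Context: A probability vector in $\mathbb{R}^n$ has non-negative entries summing to $1$. The POVM is called informationally complete if the map $\rho\mapsto\rho^P$ on (here diagonal) density matrices is injective. *)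

(* Defs.v *)
From mathcomp Require Import all_boot all_order all_algebra.
Set Implicit Arguments. Unset Strict Implicit. Unset Printing Implicit Defensive.
Import Order.TTheory GRing.Theory Num.Theory.
Local Open Scope ring_scope.

(* Indices are 0-based: 'I_n = {0,...,n-1} stands for {1,...,n}. *)

Lemma ord_pos (n : nat) (i : 'I_n) : (0 < n)%N.
Proof. exact: leq_ltn_trans (leq0n i) (ltn_ord i). Qed.

Definition addmod (n : nat) (i : 'I_n) (j : nat) : 'I_n :=
  Ordinal (ltn_pmod (i + j)%N (ord_pos i)).

Definition prob_vec (R : realFieldType) (n : nat) (l : {ffun 'I_n -> R}) : Prop :=
  (forall i, 0 <= l i) /\ \sum_(i < n) l i = 1.

Definition rhoP (R : realFieldType) (n k : nat) (l : {ffun 'I_n -> R})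
  : {ffun 'I_n -> R} :=
  [ffun i => (k%:R)^-1 * \sum_(j < k) l (addmod i j)].

(* Main.v *)
Require Import Defs.
From mathcomp Require Import all_boot all_order all_algebra.
From mathcomp Require Import ring lra.
Import Order.TTheory GRing.Theory Num.Theory.
Local Open Scope ring_scope.

Lemma tele (R : realFieldType) (U : nat -> R) (m k : nat) :
  \sum_(j < k) (U (m + j)%N - U (m + j).+1) = U m - U (m + k)%N.
Proof.
elim: k => [|k IH]; first by rewrite big_ord0 addn0 subrr.
rewrite big_ord_recr /= IH addnS; ring.
Qed.

Lemma win_step (R : realFieldType) (f : nat -> R) (k m : nat) :
  \sum_(j < k.+1) f (m.+1 + j)%N - \sum_(j < k.+1) f (m + j)%N
  = f (m + k.+1)%N - f m.
Proof.
rewrite big_ord_recr big_ord_recl /= addn0.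
have -> : \sum_(i < k) f (m + bump 0 i)%N = \sum_(i < k) f (m.+1 + i)%N.
  by apply: eq_bigr => i _; rewrite addSnnS.
rewrite addSnnS; ring.
Qed.

Lemma dir1 (R : realFieldType) (n k : nat) (npos : (0 < n)%N) (kpos : (0 < k)%N)
  (f : nat -> R) :
  coprime k n ->
  (forall m, f (m + n)%N = f m) ->
  (forall m, \sum_(j < k) f (m + j)%N = 0) ->
  forall m, f m = 0.
Proof.
move=> cop fn S.
have fk : forall m, f (m + k)%N = f m.
  clear cop; case: k kpos S => // k _ S m.
  apply/eqP; rewrite -subr_eq0 -win_step !S subrr //.
have fak : forall a m, f (m + a * k)%N = f m.
  elim=> [|a IH] m; first by rewrite mul0n addn0.
  by rewrite mulSn addnA IH fk.
have fbn : forall b m, f (m + b * n)%N = f m.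
  elim=> [|b IH] m; first by rewrite mul0n addn0.
  by rewrite mulSn addnA IH fn.
have f1 : forall m, f m.+1 = f m.
  case: (Bezoutl k npos) => a _ /dvdnP [c Hc] m.
  move: Hc; rewrite gcdnC (eqP cop) => Hc.
  by rewrite -[RHS](fbn c) -Hc -(fak a m.+1) addnA addn1.
have fc : forall m, f m = f 0%N by elim=> // m IH; rewrite f1.
have := S 0%N.
under eq_bigr do rewrite fc.
rewrite sumr_const card_ord -mulr_natr => /eqP.
rewrite mulf_eq0 pnatr_eq0 (negbTE (lt0n_neq0 kpos)) orbF => /eqP H m.
by rewrite fc.
Qed.

Lemma UmodS (g n m : nat) : (g %| n)%N ->
  ((m %% n).+1 %% g = m.+1 %% g)%N.
Proof.
move=> gn; by rewrite -addn1 -modnDml (modn_dvdm _ gn) modnDml addn1.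
Qed.

Theorem proposition5p2 (R : realFieldType) (n k : nat) :
  (2 <= k)%N -> (k <= n)%N ->
  ((forall l1 l2 : {ffun 'I_n -> R}, prob_vec l1 -> prob_vec l2 ->
      rhoP k l1 = rhoP k l2 -> l1 = l2)
   <-> coprime k n).
Proof.
move=> k2 kn.
have kpos : (0 < k)%N by apply: leq_trans k2.
have npos : (0 < n)%N by apply: leq_trans kn.
have n0 : (n%:R : R) != 0 by rewrite pnatr_eq0 -lt0n.
have k0 : (k%:R : R) != 0 by rewrite pnatr_eq0 -lt0n.
pose om (m : nat) : 'I_n := Ordinal (ltn_pmod m npos).
split; last first.
  move=> cop l1 l2 _ _ H.
  pose f m := l1 (om m) - l2 (om m).
  have fz := @dir1 R n k npos kpos f cop.
  have omi : forall i : 'I_n, om i = i.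
    by move=> i; apply: val_inj => /=; rewrite modn_small.
  apply/ffunP => i; apply/eqP; rewrite -subr_eq0.
  have <- : f i = l1 i - l2 i by rewrite /f omi.
  apply/eqP; apply: fz.
    by move=> m; rewrite /f; have -> : om (m + n)%N = om m by apply: val_inj => /=; rewrite modnDr.
  move=> m; have := congr1 (fun F : {ffun 'I_n -> R} => F (om m)) H; rewrite /= !ffunE.
  move/(mulfI (invr_neq0 k0)) => E.
  rewrite /f sumrB.
  have ad : forall j : 'I_k, addmod (om m) j = om (m + j)%N.
    by move=> j; apply: val_inj => /=; rewrite modnDml.
  under eq_bigr do rewrite -ad.
  under [X in _ - X]eq_bigr do rewrite -ad.
  by rewrite E subrr.
move=> inj; apply/negPn/negP => ncop.
pose g := gcdn k n.
have gn : (g %| n)%N by apply: dvdn_gcdr.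
have gk : (g %| k)%N by apply: dvdn_gcdl.
have g1 : (1 < g)%N.
  have : (0 < g)%N by rewrite gcdn_gt0 kpos.
  move: ncop; rewrite /coprime -/g; clearbody g; clear gn gk; by case: g => [|[|]].
pose U (m : nat) : R := ((m %% g == 0)%N)%:R.
have U01 : forall m, U m = 0 \/ U m = 1.
  by move=> m; rewrite /U; case: (_ == _); [right | left].
have Umod : forall m, U (m %% n)%N = U m by move=> m; rewrite /U (modn_dvdm _ gn).
have UmodS' : forall m, U (m %% n).+1 = U m.+1 by move=> m; rewrite /U UmodS.
have Uk : forall m, U (m + k)%N = U m.
  move=> m; case/dvdnP: gk => q ->; by rewrite /U addnC modnMDl.
have Un : U n = U 0%N by rewrite /U (eqP gn) mod0n.
pose l1 : {ffun 'I_n -> R} := [ffun i => n%:R^-1].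
pose l2 : {ffun 'I_n -> R} := [ffun i : 'I_n => n%:R^-1 + (U i - U i.+1) / n%:R].
have sum1 : \sum_(i < n) l1 i = 1.
  under eq_bigr do rewrite ffunE.
  by rewrite sumr_const card_ord -[LHS]mulr_natr (mulVf n0).
have tz : \sum_(i < n) (U i - U i.+1) = 0.
  have T := @tele R U 0 n; rewrite add0n Un subrr in T; apply: etrans _ T.
  by apply: eq_bigr => i _; rewrite add0n.
have E := inj l1 l2.
have l12 : l1 != l2.
  apply/negP => /eqP /(congr1 (fun F : {ffun 'I_n -> R} => F (Ordinal npos))).
  rewrite /= !ffunE /= => /eqP; rewrite -subr_eq0 opprD addrA subrr add0r oppr_eq0.
  rewrite /U mod0n eqxx (modn_small g1) /= subr0 mul1r.
  by rewrite invr_eq0 (negbTE n0).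
move/eqP: l12; apply; apply: E.
- split; last by [].
  by move=> i; rewrite ffunE invr_ge0 ler0n.
- split.
    move=> i; have hn : 0 <= n%:R^-1 :> R by rewrite invr_ge0 ler0n.
    by rewrite ffunE; case: (U01 i) => ->; case: (U01 i.+1) => ->; lra.
  under eq_bigr do rewrite ffunE.
  rewrite big_split /= -mulr_suml tz mul0r addr0; apply: etrans _ sum1.
  by apply: eq_bigr => i _; rewrite !ffunE.
apply/ffunP => i; rewrite !ffunE; congr (_ * _).
symmetry; under eq_bigr do rewrite ffunE.
rewrite big_split /= -mulr_suml.
have -> : \sum_(j < k) (U (addmod i j) - U (addmod i j).+1)
        = \sum_(j < k) (U (i + j)%N - U (i + j).+1).
  by apply: eq_bigr => j _; rewrite /= Umod UmodS'.
rewrite tele Uk subrr mul0r addr0.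
by apply: eq_bigr => j _; rewrite ffunE.
Qed.
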